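(* Let $n\neq 1$ be a real number, $k_n=n-1$, $m_n=\tfrac12(3n-1)$, and $k_0,k_1,k_2\in\mathbb{R}$. On the phase space with canonical coordinates $(r,\phi,p_r,p_\phi)$, $r>0$, consider $$H_{nd}=\tfrac12 r^{2n}\Big(p_r^2+\tfrac{p_\phi^2}{r^2}\Big)+k_0r^{k_n}+r^{k_n/2}\Big(k_1\cos\big(\tfrac{k_n}{2}\phi\big)+k_2\sin\big(\tfrac{k_n}{2}\phi\big)\Big).$$ Define the real functions $$A_{n1}=r^{n-1}p_\phi^2+k_0,\qquad A_{n2}=\frac{1}{r^{k_n/2}}\Big(r^{m_n}p_rp_\phi+k_1\sin\big(\tfrac{k_n}{2}\phi\big)-k_2\cos\big(\tfrac{k_n}{2}\phi\big)\Big),$$ and the complex functions $A_n=A_{n1}+iA_{n2}$ and $N_\phi=\cos(k_n\phi)+i\sin(k_n\phi)$. Then the complex function $J_{23}=A_nN_\phi$, which is quadratic in the momenta, is a constant of motion of $H_{nd}$: $\{J_{23},H_{nd}\}=0$; equivalently $\mathrm{Re}(J_{23})$ and $\mathrm{Im}(J_{23})$ both Poisson commute with $H_{nd}$.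
   Context: The Poisson bracket is the canonical one in $(r,\phi,p_r,p_\phi)$, extended complex-linearly to complex-valued functions. A constant of motion of $H$ is a function $F$ with $\{F,H\}=0$. *)

(* Defs.v *)
From Stdlib Require Import Reals.
From Coquelicot Require Import Coquelicot.
Open Scope R_scope.

Definition phase_fun := R -> R -> R -> R -> R.
Definition cphase_fun := R -> R -> R -> R -> C.

Definition d_r (F : phase_fun) r ph pr pph := Derive (fun t => F t ph pr pph) r.
Definition d_phi (F : phase_fun) r ph pr pph := Derive (fun t => F r t pr pph) ph.
Definition d_pr (F : phase_fun) r ph pr pph := Derive (fun t => F r ph t pph) pr.
Definition d_pphi (F : phase_fun) r ph pr pph := Derive (fun t => F r ph pr t) pph.

Definition poisson (F G : phase_fun) r ph pr pph :=
  d_r F r ph pr pph * d_pr G r ph pr pph - d_pr F r ph pr pph * d_r G r ph pr pph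
  + d_phi F r ph pr pph * d_pphi G r ph pr pph - d_pphi F r ph pr pph * d_phi G r ph pr pph.

Definition cpoisson (F : cphase_fun) (G : phase_fun) r ph pr pph : C :=
  (poisson (fun a b c d => Re (F a b c d)) G r ph pr pph,
   poisson (fun a b c d => Im (F a b c d)) G r ph pr pph).

Definition k_n (n : R) := n - 1.
Definition m_n (n : R) := (3 * n - 1) / 2.

(* Real powers r^x for r > 0 via Rpower. *)
Definition H_nd (n k0 k1 k2 : R) : phase_fun := fun r ph pr pph =>
  / 2 * Rpower r (2 * n) * (pr ^ 2 + pph ^ 2 / r ^ 2)
  + k0 * Rpower r (k_n n)
  + Rpower r (k_n n / 2) * (k1 * cos (k_n n / 2 * ph) + k2 * sin (k_n n / 2 * ph)).

Definition A_n1 (n k0 : R) : phase_fun := fun r ph pr pph =>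
  Rpower r (n - 1) * pph ^ 2 + k0.

Definition A_n2 (n k1 k2 : R) : phase_fun := fun r ph pr pph =>
  / Rpower r (k_n n / 2) *
  (Rpower r (m_n n) * pr * pph + k1 * sin (k_n n / 2 * ph) - k2 * cos (k_n n / 2 * ph)).

Definition A_n (n k0 k1 k2 : R) : cphase_fun := fun r ph pr pph =>
  (A_n1 n k0 r ph pr pph, A_n2 n k1 k2 r ph pr pph).

Definition N_phi (n : R) : cphase_fun := fun r ph pr pph =>
  (cos (k_n n * ph), sin (k_n n * ph)).

Definition J23 (n k0 k1 k2 : R) : cphase_fun := fun r ph pr pph =>
  Cmult (A_n n k0 k1 k2 r ph pr pph) (N_phi n r ph pr pph).

(* Main.v *)
Require Import Defs.
From Stdlib Require Import Reals Lra.
From Coquelicot Require Import Coquelicot.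
Open Scope R_scope.

Lemma D_eq (f : R -> R) x l : is_derive f x l -> Derive f x = l.
Proof. apply is_derive_unique. Qed.

Theorem proposition2 (n k0 k1 k2 : R) (hn : n <> 1) :
  forall r ph pr pph : R, 0 < r ->
    cpoisson (J23 n k0 k1 k2) (H_nd n k0 k1 k2) r ph pr pph = RtoC 0.
Proof.
intros r ph pr pph hr.
unfold cpoisson, poisson, d_r, d_phi, d_pr, d_pphi, J23, A_n, N_phi, H_nd, A_n1, A_n2,
  Rpower, k_n, m_n, Cmult; simpl.
repeat (erewrite D_eq; cycle 1;
  [ auto_derive; [ repeat split; try lra; try nra; try (apply Rgt_not_eq, exp_pos) | reflexivity ] | ]).
set (s := exp ((n - 1) / 2 * ln r)).
assert (hs : 0 < s) by apply exp_pos.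
assert (e1 : exp ((n - 1) * ln r) = s * s).
{ unfold s; rewrite <- exp_plus; f_equal; field. }
assert (e2 : exp (2 * n * ln r) = s * s * s * s * (r * r)).
{ unfold s; replace (2 * n * ln r) with ((n - 1) / 2 * ln r + (n - 1) / 2 * ln r + (n - 1) / 2 * ln r + (n - 1) / 2 * ln r + ln r + ln r) by field.
  rewrite !exp_plus, (exp_ln r hr); ring. }
assert (e3 : exp ((3 * n - 1) / 2 * ln r) = s * s * s * r).
{ unfold s; replace ((3 * n - 1) / 2 * ln r) with ((n - 1) / 2 * ln r + (n - 1) / 2 * ln r + (n - 1) / 2 * ln r + ln r) by field.
  rewrite !exp_plus, (exp_ln r hr); ring. }
rewrite e1, e2, e3.
set (c := cos ((n - 1) / 2 * ph)).
set (si := sin ((n - 1) / 2 * ph)).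
assert (t1 : cos ((n - 1) * ph) = c * c - si * si).
{ unfold c, si; rewrite <- cos_2a; f_equal; field. }
assert (t2 : sin ((n - 1) * ph) = 2 * si * c).
{ unfold c, si; rewrite <- sin_2a; f_equal; field. }
rewrite t1, t2.
unfold RtoC; f_equal; field; lra.
Qed.
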